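(* Let $H$ and $\tilde H$ be equivalent dephased $d\times d$ complex Hadamard matrices. Then $\eta_c(H)=\eta_c(\tilde H)$, $\eta_r(H)=\eta_r(\tilde H)$, $\eta_{\bar c}(H)=\eta_{\bar c}(\tilde H)$ and $\eta_{\bar r}(H)=\eta_{\bar r}(\tilde H)$.
   Context: A $d\times d$ complex Hadamard matrix has unimodular entries and pairwise orthogonal columns; it is dephased if its first row and first column consist of $1$'s. Two complex Hadamard matrices $H_1,H_2$ are equivalent if $H_2=D_1P_1H_1P_2D_2$ with $D_1,D_2$ diagonal unitary and $P_1,P_2$ permutation matrices. Two distinct columns $C_A,C_B$ form an ER pair if $\overline{(C_A)_j}(C_B)_j\in\{1,-1\}$ for every $j$; ER pairs of rows are defined analogously. Two ER pairs of columns $\{C_1,C_2\}$ and $\{C_3,C_4\}$ are aligned if $\overline{(C_1)_k}(C_2)_k=\overline{(C_3)_k}(C_4)_k$ for every $k$ (analogously for rows). $\eta_c(H)$ (resp. $\eta_r(H)$) is the maximal number of pairwise disjoint ER pairs of columns (resp. rows) of $H$, and $\eta_{\bar c}(H)$ (resp. $\eta_{\bar r}(H)$) is the maximal number of pairwise disjoint ER pairs of columns (resp. rows) of $H$ that are mutually aligned. *)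

(* Defs.v *)
(* Complex numbers: any numClosedFieldType C
   (this covers the complex numbers, e.g. R[i] for a real closed field R). *)
From HB Require Import structures.
From mathcomp Require Import all_boot all_order all_algebra all_fingroup.
Set Implicit Arguments. Unset Strict Implicit. Unset Printing Implicit Defensive.
Import Order.TTheory GRing.Theory Num.Theory.
Local Open Scope ring_scope.

Section Hadamard.
Variable C : numClosedFieldType.

Definition complex_hadamard d (H : 'M[C]_d) : Prop :=
  (forall i j, `|H i j| = 1) /\
  (forall a b : 'I_d, a != b -> \sum_(k < d) (H k a)^* * H k b = 0).

Definition dephased d (H : 'M[C]_d) : Prop :=
  forall i j : 'I_d, (nat_of_ord i = 0%N -> H i j = 1) /\
                     (nat_of_ord j = 0%N -> H i j = 1).

Definition diag_unitary d (D : 'M[C]_d) : Prop :=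
  exists v : 'rV[C]_d, (forall j, `|v 0 j| = 1) /\ D = diag_mx v.

Definition hadamard_equiv d (H1 H2 : 'M[C]_d) : Prop :=
  exists (D1 D2 : 'M[C]_d) (s1 s2 : 'S_d),
    [/\ diag_unitary D1, diag_unitary D2 &
        H2 = D1 *m perm_mx s1 *m H1 *m perm_mx s2 *m D2].

Definition er_col d (H : 'M[C]_d) (a b : 'I_d) : bool :=
  (a != b) && [forall j, ((H j a)^* * H j b == 1) || ((H j a)^* * H j b == -1)].

Definition aligned_col d (H : 'M[C]_d) (p q : 'I_d * 'I_d) : bool :=
  [forall k, (H k p.1)^* * H k p.2 == (H k q.1)^* * H k q.2].

Definition disjoint_pairs d (p q : 'I_d * 'I_d) : bool :=
  [&& p.1 != q.1, p.1 != q.2, p.2 != q.1 & p.2 != q.2].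

(* S is a family of pairwise disjoint ER pairs of columns; each unordered
   pair {a,b} is represented once, as (a,b) with a < b *)
Definition er_family d (H : 'M[C]_d) (S : {set 'I_d * 'I_d}) : bool :=
  [forall p in S, (p.1 < p.2)%N && er_col H p.1 p.2] &&
  [forall p in S, forall q in S, (p != q) ==> disjoint_pairs p q].

Definition aligned_family d (H : 'M[C]_d) (S : {set 'I_d * 'I_d}) : bool :=
  [forall p in S, forall q in S, aligned_col H p q].

Definition eta_c d (H : 'M[C]_d) : nat :=
  \max_(S : {set 'I_d * 'I_d} | er_family H S) #|S|.

Definition eta_cbar d (H : 'M[C]_d) : nat :=
  \max_(S : {set 'I_d * 'I_d} | er_family H S && aligned_family H S) #|S|.

Definition eta_r d (H : 'M[C]_d) : nat := eta_c H^T.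
Definition eta_rbar d (H : 'M[C]_d) : nat := eta_cbar H^T.

End Hadamard.

(* Main.v *)
Require Import Defs.
From HB Require Import structures.
From mathcomp Require Import all_boot all_order all_algebra all_fingroup.
From mathcomp Require Import ring.
Import Order.TTheory GRing.Theory Num.Theory.
Local Open Scope ring_scope.
Set Implicit Arguments. Unset Strict Implicit.

Section S.
Variable C : numClosedFieldType.

Definition pm1 (x : C) : bool := (x == 1) || (x == -1).
Definition rt d (M : 'M[C]_d) k a b := (M k a)^* * M k b.

Lemma pm1M x y : pm1 x -> pm1 y -> pm1 (x * y).
Proof.
by rewrite /pm1 => /orP[] /eqP-> /orP[] /eqP->;
  rewrite ?mulr1 ?mul1r ?mulrN1 ?opprK ?eqxx ?orbT.
Qed.

Lemma pm1_sqr x : pm1 x -> x * x = 1.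
Proof. by rewrite /pm1 => /orP[] /eqP->; rewrite ?mulr1 ?mulrNN ?mulr1. Qed.

Lemma pm1_conj x : pm1 x -> x^* = x.
Proof. by rewrite /pm1 => /orP[] /eqP->; rewrite ?conjCN1 ?conjC1. Qed.

Lemma rt_sym d (M : 'M[C]_d) k a b : rt M k b a = (rt M k a b)^*.
Proof. by rewrite /rt rmorphM /= conjCK mulrC. Qed.

Lemma pm1_conjE x : pm1 x^* = pm1 x.
Proof.
apply/idP/idP => h; first by rewrite -(conjCK x) (pm1_conj h).
by rewrite pm1_conj.
Qed.

Lemma er_colE d (M : 'M[C]_d) a b :
  er_col M a b = (a != b) && [forall j, pm1 (rt M j a b)].
Proof. by []. Qed.

Lemma er_col_sym d (M : 'M[C]_d) a b : er_col M a b = er_col M b a.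
Proof.
rewrite !er_colE eq_sym; congr (_ && _); apply: eq_forallb => j.
by rewrite rt_sym pm1_conjE.
Qed.

Lemma er_rt d (M : 'M[C]_d) a b k : er_col M a b -> rt M k b a = rt M k a b.
Proof.
rewrite er_colE => /andP[_ /forallP /(_ k) h].
by rewrite rt_sym pm1_conj.
Qed.

Lemma aligned_colE d (M : 'M[C]_d) p q :
  aligned_col M p q = [forall k, rt M k p.1 p.2 == rt M k q.1 q.2].
Proof. by []. Qed.

Lemma aligned_swap1 d (M : 'M[C]_d) a b q :
  er_col M a b -> aligned_col M (b, a) q = aligned_col M (a, b) q.
Proof.
move=> h; rewrite !aligned_colE; apply: eq_forallb => k /=.
by rewrite (er_rt _ h).
Qed.

Lemma aligned_swap2 d (M : 'M[C]_d) a b p :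
  er_col M a b -> aligned_col M p (b, a) = aligned_col M p (a, b).
Proof.
move=> h; rewrite !aligned_colE; apply: eq_forallb => k /=.
by rewrite (er_rt _ h).
Qed.


Section Keys.
Variables (d : nat) (H Ht : 'M[C]_d) (u w : 'I_d -> C) (f g : 'S_d).
Hypothesis hu : forall i, `|u i| = 1.
Hypothesis hH : forall i j : 'I_d, nat_of_ord i = 0%N -> H i j = 1.
Hypothesis hHt : forall i j : 'I_d, nat_of_ord i = 0%N -> Ht i j = 1.
Hypothesis hE : forall i j, Ht i j = u i * H (f i) (g j) * w j.

Definition cw a b := (w a)^* * w b.

Lemma F1 j a b : rt Ht j a b = rt H (f j) (g a) (g b) * cw a b.
Proof.
rewrite /rt /cw !hE !rmorphM /=.
have e : (u j)^* * u j = 1 by rewrite mulrC -normCK hu expr1n.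
transitivity ((u j)^* * u j * ((H (f j) (g a))^* * H (f j) (g b) * ((w a)^* * w b))).
  ring.
by rewrite e mul1r.
Qed.

Variable d0 : (0 < d)%N.
Let i0 : 'I_d := Ordinal d0.

Lemma F2 a b : rt Ht ((f^-1)%g i0) a b = cw a b.
Proof. by rewrite F1 permKV /rt (@hH i0 (g a)) // (@hH i0 (g b)) // conjC1 !mul1r. Qed.

Lemma F3 a b : rt H (f i0) (g a) (g b) * cw a b = 1.
Proof. by rewrite -F1 /rt (@hHt i0 a) // (@hHt i0 b) // conjC1 mulr1. Qed.

Lemma cw_pm1 a b : er_col Ht a b -> pm1 (cw a b).
Proof. by rewrite er_colE -F2 => /andP[_ /forallP]. Qed.

Lemma cw_r a b : er_col Ht a b -> cw a b = rt H (f i0) (g a) (g b).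
Proof.
move=> /cw_pm1 h.
by rewrite -[RHS]mulr1 -(pm1_sqr h) mulrA F3 mul1r.
Qed.

Lemma rtH_expr a b k : er_col Ht a b ->
  rt H k (g a) (g b) = rt Ht ((f^-1)%g k) a b * rt Ht ((f^-1)%g i0) a b.
Proof.
move=> h; rewrite F2 F1 permKV -mulrA pm1_sqr ?mulr1 //.
exact: cw_pm1.
Qed.

Lemma rtHt_expr a b k : er_col Ht a b ->
  rt Ht k a b = rt H (f k) (g a) (g b) * rt H (f i0) (g a) (g b).
Proof. by move=> h; rewrite F1 cw_r. Qed.

Lemma K1 a b : er_col Ht a b = er_col H (g a) (g b).
Proof.
rewrite !er_colE (inj_eq perm_inj); congr (_ && _).
apply/forallP/forallP => h k.
  have hc : pm1 (cw a b) by rewrite -F2.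
  have -> : rt H k (g a) (g b) = rt Ht ((f^-1)%g k) a b * cw a b.
    by rewrite F1 permKV -mulrA pm1_sqr ?mulr1.
  exact: pm1M.
have ec : cw a b = rt H (f i0) (g a) (g b).
  by rewrite -[LHS]mul1r -(pm1_sqr (h (f i0))) -mulrA F3 mulr1.
by rewrite F1 ec; apply: pm1M.
Qed.

Lemma K2 p q : er_col Ht p.1 p.2 -> er_col Ht q.1 q.2 ->
  aligned_col Ht p q = aligned_col H (g p.1, g p.2) (g q.1, g q.2).
Proof.
case: p q => a b [a' b'] /= hp hq; rewrite !aligned_colE /=.
apply/forallP/forallP => h k.
  by rewrite (rtH_expr _ hp) (rtH_expr _ hq) !(eqP (h _)).
by rewrite (rtHt_expr _ hp) (rtHt_expr _ hq) !(eqP (h _)).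
Qed.

End Keys.

Definition K1p d (H Ht : 'M[C]_d) (g : 'S_d) :=
  forall a b, er_col Ht a b = er_col H (g a) (g b).
Definition K2p d (H Ht : 'M[C]_d) (g : 'S_d) :=
  forall p q, er_col Ht p.1 p.2 -> er_col Ht q.1 q.2 ->
  aligned_col Ht p q = aligned_col H (g p.1, g p.2) (g q.1, g q.2).

Lemma K_sym d (H Ht : 'M[C]_d) (g : 'S_d) :
  K1p H Ht g -> K2p H Ht g -> K1p Ht H (g^-1)%g /\ K2p Ht H (g^-1)%g.
Proof.
move=> k1 k2; split=> [a b|[a b] [a' b'] /= h1 h2]; first by rewrite k1 !permKV.
have h1' : er_col Ht ((g^-1)%g a) ((g^-1)%g b) by rewrite k1 !permKV.
have h2' : er_col Ht ((g^-1)%g a') ((g^-1)%g b') by rewrite k1 !permKV.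
by rewrite (k2 ((g^-1)%g a, (g^-1)%g b) ((g^-1)%g a', (g^-1)%g b')) //= !permKV.
Qed.

Lemma dp_swap1 d (x y : 'I_d * 'I_d) :
  disjoint_pairs (x.2, x.1) y = disjoint_pairs x y.
Proof. by rewrite /disjoint_pairs /=; do !case: (_ != _). Qed.

Lemma dp_swap2 d (x y : 'I_d * 'I_d) :
  disjoint_pairs x (y.2, y.1) = disjoint_pairs x y.
Proof. by rewrite /disjoint_pairs /=; do !case: (_ != _). Qed.

Section Mono.
Variables (d : nat) (H Ht : 'M[C]_d) (g : 'S_d).
Hypotheses (k1 : K1p H Ht g) (k2 : K2p H Ht g).
Let h := (g^-1)%g.

Definition phi (p : 'I_d * 'I_d) :=
  if (h p.1 < h p.2)%N then (h p.1, h p.2) else (h p.2, h p.1).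

Lemma phi_cases (p : 'I_d * 'I_d) : phi p = (h p.1, h p.2) \/
  phi p = ((h p.1, h p.2).2, (h p.1, h p.2).1).
Proof. by rewrite /phi; case: ifP; [left|right]. Qed.

Lemma gphi (p : 'I_d * 'I_d) : (g (phi p).1, g (phi p).2) = p \/
  (g (phi p).1, g (phi p).2) = (p.2, p.1).
Proof.
by case: p => a b; rewrite /phi; case: ifP => _; [left|right]; rewrite /= /h !permKV.
Qed.

Lemma dp_phi (p q : 'I_d * 'I_d) : disjoint_pairs (phi p) (phi q) = disjoint_pairs p q.
Proof.
have e : disjoint_pairs (h p.1, h p.2) (h q.1, h q.2) = disjoint_pairs p q.
  by rewrite /disjoint_pairs /= !(inj_eq perm_inj).
by case: (phi_cases p) => ->; case: (phi_cases q) => ->;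
  rewrite ?dp_swap1 ?dp_swap2.
Qed.

Lemma phi_good (p : 'I_d * 'I_d) : (p.1 < p.2)%N -> er_col H p.1 p.2 ->
  ((phi p).1 < (phi p).2)%N && er_col Ht (phi p).1 (phi p).2.
Proof.
case: p => a b /= lab eab.
have nab : nat_of_ord (h a) != nat_of_ord (h b).
  rewrite (inj_eq val_inj) (inj_eq perm_inj).
  by apply: contraTneq lab => ->; rewrite ltnn.
rewrite /phi /=; case: ifP => [lt|nlt] /=.
  by rewrite lt k1 /h !permKV.
have gt : (h b < h a)%N by rewrite ltn_neqAle eq_sym nab leqNgt nlt.
by rewrite gt k1 /h !permKV er_col_sym.
Qed.

Lemma phi_inj (p q : 'I_d * 'I_d) : (p.1 < p.2)%N -> (q.1 < q.2)%N -> phi p = phi q -> p = q.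
Proof.
case: p q => [a b] [a' b'] /= l1 l2.
rewrite /phi /=; case: ifP => _; case: ifP => _; case=> /perm_inj e1 /perm_inj e2.
all: try by rewrite e1 e2.
all: by move: l1; rewrite e1 e2 ltnNge (ltnW l2).
Qed.

Lemma mono_set (S : {set 'I_d * 'I_d}) : er_family H S ->
  [/\ er_family Ht (phi @: S), #|phi @: S| = #|S| &
      aligned_family H S -> aligned_family Ht (phi @: S)].
Proof.
move=> /andP[/forall_inP h1 /forall_inP h2].
have good p : p \in S -> ((phi p).1 < (phi p).2)%N && er_col Ht (phi p).1 (phi p).2.
  by move=> /h1 /andP[l e]; apply: phi_good.
split.
- apply/andP; split.
    by apply/forall_inP => _ /imsetP[p pS ->]; apply: good.
  apply/forall_inP => _ /imsetP[p pS ->]; apply/forall_inP => _ /imsetP[q qS ->].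
  apply/implyP => npq; rewrite dp_phi.
  have: p != q by apply: contraNneq npq => ->.
  by move/forall_inP: (h2 p pS) => /(_ q qS) /implyP; apply.
- apply: card_in_imset => p q pS qS; apply: phi_inj.
    by case/andP: (h1 p pS).
  by case/andP: (h1 q qS).
- move=> /forall_inP al; apply/forall_inP => _ /imsetP[[a b] pS ->].
  apply/forall_inP => _ /imsetP[[a' b'] qS ->].
  case/andP: (good _ pS) => _ ep; case/andP: (good _ qS) => _ eq.
  rewrite k2 //.
  case/andP: (h1 _ pS) => _ /= eHp; case/andP: (h1 _ qS) => _ /= eHq.
  have al' := forall_inP (al _ pS) _ qS.
  have E1 X : aligned_col H (g (phi (a, b)).1, g (phi (a, b)).2) X = aligned_col H (a, b) X.
    by case: (gphi (a, b)) => -> //=; rewrite (aligned_swap1 X eHp).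
  have E2 X : aligned_col H X (g (phi (a', b')).1, g (phi (a', b')).2) = aligned_col H X (a', b').
    by case: (gphi (a', b')) => -> //=; rewrite (aligned_swap2 X eHq).
  by rewrite E1 E2.
Qed.

Lemma eta_mono : (eta_c H <= eta_c Ht)%N /\ (eta_cbar H <= eta_cbar Ht)%N.
Proof.
split; apply/bigmax_leqP => S.
  by move=> /mono_set [e c _]; rewrite -c /eta_c; apply: leq_bigmax_cond.
move=> /andP[/mono_set [e c a] al]; rewrite -c.
by rewrite /eta_cbar; apply: leq_bigmax_cond; rewrite e a.
Qed.

End Mono.

Lemma eta_eq d (H Ht : 'M[C]_d) (u w : 'I_d -> C) (f g : 'S_d) :
  (forall i, `|u i| = 1) ->
  (forall i j : 'I_d, nat_of_ord i = 0%N -> H i j = 1) ->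
  (forall i j : 'I_d, nat_of_ord i = 0%N -> Ht i j = 1) ->
  (forall i j, Ht i j = u i * H (f i) (g j) * w j) ->
  eta_c H = eta_c Ht /\ eta_cbar H = eta_cbar Ht.
Proof.
move=> hu hH hHt hE.
have k1 : K1p H Ht g.
  move=> a b; exact: (K1 hu hH hHt hE (leq_ltn_trans (leq0n a) (ltn_ord a))).
have k2 : K2p H Ht g.
  move=> p q; exact: (K2 hu hH hHt hE (leq_ltn_trans (leq0n p.1) (ltn_ord p.1))).
case: (K_sym k1 k2) => k1' k2'.
case: (eta_mono k1 k2) => l1 l2; case: (eta_mono k1' k2') => l3 l4.
by split; apply/eqP; rewrite eqn_leq ?l1 ?l2 ?l3 ?l4.
Qed.

End S.

Theorem corollary3 (C : numClosedFieldType) (d : nat) (H Ht : 'M[C]_d) :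
  complex_hadamard H -> complex_hadamard Ht ->
  dephased H -> dephased Ht ->
  hadamard_equiv H Ht ->
  [/\ eta_c H = eta_c Ht, eta_r H = eta_r Ht,
      eta_cbar H = eta_cbar Ht & eta_rbar H = eta_rbar Ht].
Proof.
move=> _ _ dH dHt [D1 [D2 [s1 [s2 [[v1 [hv1 ->]] [v2 [hv2 ->]] EH]]]]].
have hE : forall i j, Ht i j = v1 0 i * H (s1 i) ((s2^-1)%g j) * v2 0 j.
  move=> i j; rewrite EH.
  have -> : diag_mx v1 *m perm_mx s1 *m H *m perm_mx s2 *m diag_mx v2
      = diag_mx v1 *m col_perm (s2^-1)%g (row_perm s1 H) *m diag_mx v2.
    by rewrite col_permE invgK row_permE !mulmxA.
  by rewrite mul_mx_diag mul_diag_mx !mxE.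
have [c1 c2] := eta_eq hv1 (fun i j e => (dH i j).1 e) (fun i j e => (dHt i j).1 e) hE.
have hET : forall i j, Ht^T i j = v2 0 i * H^T ((s2^-1)%g i) (s1 j) * v1 0 j.
  by move=> i j; rewrite !mxE hE mulrC [v1 0 j * _]mulrC mulrA.
have hT1 : forall i j : 'I_d, nat_of_ord i = 0%N -> H^T i j = 1.
  by move=> i j e; rewrite mxE; exact: (dH j i).2 e.
have hT2 : forall i j : 'I_d, nat_of_ord i = 0%N -> Ht^T i j = 1.
  by move=> i j e; rewrite mxE; exact: (dHt j i).2 e.
have [r1 r2] := eta_eq hv2 hT1 hT2 hET.
by split.
Qed.
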